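(* Let $K$ be a valued field and $d\ge1$. Then the dual VC-dimension of $\operatorname{Conv}_{K^d}$ is exactly $d$: there are $d$ convex sets $S_1,\dots,S_d\subseteq K^d$ such that all $2^d$ sets $\bigcap_{i\in I}S_i\cap\bigcap_{i\notin I}(K^d\setminus S_i)$, $I\subseteq\{1,\dots,d\}$, are nonempty, but for no $d+1$ convex sets $S_1,\dots,S_{d+1}$ are all $2^{d+1}$ such sets nonempty.
   Context: $K$ is a field with valuation $\nu$ and valuation ring $\mathcal{O}=\{x:\nu(x)\ge0\}$. A set $X\subseteq K^d$ is convex if it is closed under combinations $\sum_{i=1}^n\alpha_ix_i$ with $x_i\in X$, $\alpha_i\in\mathcal{O}$, $\sum\alpha_i=1$; $\operatorname{Conv}_{K^d}$ is the family of all convex subsets of $K^d$. The dual VC-dimension of a family $\mathcal{F}\subseteq\mathcal{P}(X)$ is the largest $k$ such that there exist $S_1,\dots,S_k\in\mathcal{F}$ with $\bigcap_{i\in I}S_i\cap\bigcap_{i\in[k]\setminus I}(X\setminus S_i)\neq\emptyset$ for every $I\subseteq[k]$ (or $\infty$). *)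

(* Defs.v *)
From mathcomp Require Import all_boot all_order all_algebra.
Unset Strict Implicit. Unset Printing Implicit Defensive.
Import Order.TTheory GRing.Theory.
Local Open Scope ring_scope.

Record is_ordered_abelian_group (G : zmodType) (le : rel G) : Prop := {
  oag_refl : forall x, le x x;
  oag_anti : forall x y, le x y -> le y x -> x = y;
  oag_trans : forall x y z, le x y -> le y z -> le x z;
  oag_total : forall x y, le x y || le y x;
  oag_add : forall x y z, le x y -> le (x + z) (y + z)
}.

(* Γ ∪ {∞}, with ∞ represented by None. *)
Definition oge (G : zmodType) (le : rel G) (a b : option G) : bool :=
  match a, b with
  | None, _ => true
  | Some _, None => false
  | Some x, Some y => le y x
  end.

Definition omin (G : zmodType) (le : rel G) (a b : option G) : option G :=
  if oge G le a b then b else a.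

Definition oadd (G : zmodType) (a b : option G) : option G :=
  match a, b with
  | Some x, Some y => Some (x + y)
  | _, _ => None
  end.

Record is_valuation (K : fieldType) (G : zmodType) (le : rel G)
    (nu : K -> option G) : Prop := {
  val_inf : forall x, nu x = None <-> x = 0;
  val_mul : forall x y, nu (x * y) = oadd G (nu x) (nu y);
  val_add : forall x y, oge G le (nu (x + y)) (omin G le (nu x) (nu y))
}.

Definition in_O (K : fieldType) (G : zmodType) (le : rel G)
    (nu : K -> option G) (x : K) : Prop := oge G le (nu x) (Some 0).

Definition convex (K : fieldType) (G : zmodType) (le : rel G)
    (nu : K -> option G) (d : nat) (X : 'rV[K]_d -> Prop) : Prop :=
  forall (n : nat) (x : 'I_n -> 'rV[K]_d) (alpha : 'I_n -> K),
    (forall i, X (x i)) -> (forall i, in_O K G le nu (alpha i)) ->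
    \sum_(i < n) alpha i = 1 ->
    X (\sum_(i < n) alpha i *: x i).

Definition dual_shatters (T : Type) (F : (T -> Prop) -> Prop) (k : nat) : Prop :=
  exists S : 'I_k -> (T -> Prop),
    (forall i, F (S i)) /\
    forall I : {set 'I_k}, exists x : T,
      forall i : 'I_k, (i \in I -> S i x) /\ (i \notin I -> ~ S i x).

Definition dual_vc_dim_eq (T : Type) (F : (T -> Prop) -> Prop) (k : nat) : Prop :=
  dual_shatters T F k /\ forall m, dual_shatters T F m -> (m <= k)%N.

(* Main.v *)
Require Import Defs.
From mathcomp Require Import all_boot all_order all_algebra.
From Stdlib Require Import ClassicalEpsilon.

Import GRing.Theory.
Local Open Scope ring_scope.

Section Helpers.
Variables (K : fieldType) (G : zmodType) (le : rel G) (nu : K -> option G).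
Hypothesis HG : is_ordered_abelian_group G le.
Hypothesis Hv : is_valuation K G le nu.

Lemma oge_trans a b c : oge G le a b -> oge G le b c -> oge G le a c.
Proof.
case: a => [a|]; case: b => [b|]; case: c => [c|] //= h1 h2.
exact: (oag_trans _ _ HG _ _ _ h2 h1).
Qed.

Lemma oge_total a b : oge G le a b || oge G le b a.
Proof. case: a => [a|]; case: b => [b|] //=; by rewrite orbC (oag_total _ _ HG). Qed.

Lemma omin_ge a b c : oge G le a c -> oge G le b c -> oge G le (omin G le a b) c.
Proof. rewrite /omin; by case: ifP. Qed.

Lemma le_cancel (a b c : G) : le (a + c) (b + c) -> le a b.
Proof.
move=> h; have := oag_add _ _ HG _ _ (- c) h. by rewrite -!addrA subrr !addr0.
Qed.

Lemma zero_of_double (c : G) : c + c = 0 -> c = 0.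
Proof.
move=> h; case/orP: (oag_total _ _ HG 0 c) => hc.
- have := oag_add _ _ HG _ _ c hc; rewrite add0r h => h2; exact: oag_anti _ _ HG _ _ h2 hc.
- have := oag_add _ _ HG _ _ c hc; rewrite add0r h => h2; exact: oag_anti _ _ HG _ _ hc h2.
Qed.

Lemma double_self (c : G) : c + c = c -> c = 0.
Proof. by rewrite -{3}[c]addr0 => /addrI. Qed.

Lemma nu1 : nu 1 = Some 0.
Proof.
have := val_mul _ _ _ _ Hv 1 1; rewrite mulr1.
case E: (nu 1) => [e|] /=.
- by case=> /esym /double_self ->.
- by move: E => /(val_inf _ _ _ _ Hv) /eqP; rewrite oner_eq0.
Qed.

Lemma num1 : nu (-1) = Some 0.
Proof.
have := val_mul _ _ _ _ Hv (-1) (-1); rewrite mulrNN mulr1 nu1.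
case E: (nu (-1)) => [e|] //=.
by case=> /esym /zero_of_double ->.
Qed.

Lemma O0 : in_O K G le nu 0.
Proof. by rewrite /in_O (proj2 (val_inf _ _ _ _ Hv 0) erefl). Qed.

Lemma O1 : in_O K G le nu 1.
Proof. by rewrite /in_O nu1 /= (oag_refl _ _ HG). Qed.

Lemma OD x y : in_O K G le nu x -> in_O K G le nu y -> in_O K G le nu (x + y).
Proof.
rewrite /in_O => hx hy; apply: oge_trans (val_add _ _ _ _ Hv x y) _.
exact: omin_ge.
Qed.

Lemma OM x y : in_O K G le nu x -> in_O K G le nu y -> in_O K G le nu (x * y).
Proof.
rewrite /in_O (val_mul _ _ _ _ Hv).
case: (nu x) => [a|]; case: (nu y) => [b|] //= ha hb.
have := oag_add _ _ HG _ _ b ha; rewrite add0r => h; exact: oag_trans _ _ HG _ _ _ hb h.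
Qed.

Lemma ON x : in_O K G le nu x -> in_O K G le nu (- x).
Proof.
move=> h; rewrite -mulN1r; apply: OM => //.
by rewrite /in_O num1 /= (oag_refl _ _ HG).
Qed.

Lemma Osum n (f : 'I_n -> K) : (forall i, in_O K G le nu (f i)) ->
  in_O K G le nu (\sum_(i < n) f i).
Proof.
move=> h; apply: (big_ind (in_O K G le nu)) => //; [exact: O0 | exact: OD].
Qed.

Lemma Odiv a b : b != 0 -> oge G le (nu a) (nu b) -> in_O K G le nu (a / b).
Proof.
move=> b0 hab.
have ea : a = (a / b) * b by rewrite divfK.
move: hab; rewrite {1}ea (val_mul _ _ _ _ Hv) /in_O.
case E: (nu b) => [c|]; last by move: E => /(val_inf _ _ _ _ Hv) /eqP; rewrite (negbTE b0).
case: (nu (a / b)) => [x|] //= h.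
apply: (@le_cancel 0 x c); by rewrite add0r.
Qed.

Lemma exists_min (T : eqType) (f : T -> option G) (s : seq T) :
  s != [::] -> exists2 j, j \in s & forall k, k \in s -> oge G le (f k) (f j).
Proof.
elim: s => [|a s IH] // _.
case: s IH => [|b s] IH.
  exists a; first by rewrite inE.
  move=> k; rewrite inE => /eqP ->; by case: (f a) => //= x; rewrite /= (oag_refl _ _ HG).
have [j js hj] := IH isT.
case/orP: (oge_total (f a) (f j)) => h.
- exists j; first by rewrite inE js orbT.
  move=> k; rewrite inE => /orP [/eqP ->|] //; exact: hj.
- exists a; first by rewrite inE eqxx.
  move=> k; rewrite inE => /orP [/eqP ->|ks].
    by case: (f a) => //= x; rewrite /= (oag_refl _ _ HG).
  exact: oge_trans (hj _ ks) h.
Qed.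

End Helpers.

Lemma sum_ite (V : zmodType) n (j0 : 'I_n) (v : V) :
  \sum_(j < n) (if j == j0 then v else 0) = v.
Proof. by rewrite (bigD1 j0) //= eqxx big1 ?addr0 // => j /negbTE ->. Qed.

Lemma vec_alg (K : fieldType) d (A z y : 'rV[K]_d) (s : K) :
  0 = A - s *: z + (y - z) -> - A + (1 + s) *: z = y.
Proof.
move=> /eqP; rewrite eq_sym -addrA addr_eq0 => /eqP ->.
rewrite opprK scalerDl scale1r.
by rewrite addrC addrA addrAC subrK subrK.
Qed.

Theorem theorem4p10 (K : fieldType) (G : zmodType) (le : rel G)
    (nu : K -> option G) (d : nat) :
  is_ordered_abelian_group G le -> is_valuation K G le nu -> (0 < d)%N ->
  dual_vc_dim_eq _ (convex K G le nu d) d.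
Proof.
move=> HG Hv _; split.
  exists (fun i => fun x : 'rV[K]_d => x 0 i = 0); split.
    move=> i n x alpha hx _ _; rewrite summxE; apply: big1 => k _.
    by rewrite mxE hx mulr0.
  move=> I; exists (\row_k (if k \in I then 0 else 1)) => i; rewrite mxE.
  by case: (i \in I); split => // _ /eqP; rewrite oner_eq0.
move=> m [S [hS hreg]]; rewrite leqNgt; apply/negP => hm.
have [x0 hx0] := hreg setT.
have hx0S : forall i, S i x0 by move=> i; apply: (proj1 (hx0 i)); rewrite inE.
pose w (j : 'I_d.+1) : 'I_m := widen_ord hm j.
pose y (j : 'I_d.+1) : 'rV[K]_d :=
  proj1_sig (constructive_indefinite_description _ (hreg [set~ w j])).
have hy j : forall i, (i \in [set~ w j] -> S i (y j)) /\ (i \notin [set~ w j] -> ~ S i (y j)).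
  exact: (proj2_sig (constructive_indefinite_description _ (hreg [set~ w j]))).
have hyS j i : i != w j -> S i (y j).
  by move=> ne; apply: (proj1 (hy j i)); rewrite !inE.
have hyN j : ~ S (w j) (y j) by apply: (proj2 (hy j (w j))); rewrite !inE eqxx.
pose A := \matrix_(j < d.+1, k < d) (y j - x0) 0 k.
have hrowA j : row j A = y j - x0 by apply/rowP => k; rewrite !mxE.
have nfree : ~~ row_free A.
  by rewrite /row_free neq_ltn ltnS rank_leq_col.
have ker0 : kermx A != 0 by rewrite kermx_eq0.
have [i hi] : exists i, row i (kermx A) != 0.
  case: (pickP (fun i => row i (kermx A) != 0)) => [i hi|h]; first by exists i.
  case/negP: ker0; apply/eqP/row_matrixP => i; rewrite row0.
  by have /negbFE/eqP := h i.
pose lam := row i (kermx A).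
have hlam : lam *m A = 0 by rewrite /lam -row_mul mulmx_ker row0.
have [k hk] : exists k, lam 0 k != 0.
  case: (pickP (fun k => lam 0 k != 0)) => [k hk|h]; first by exists k.
  case/negP: hi; apply/eqP/rowP => k; rewrite [RHS]mxE; apply/eqP.
  exact: negbFE (h k).
have hsum : \sum_j lam 0 j *: (y j - x0) = 0.
  by rewrite -[RHS]hlam mulmx_sum_row; apply: eq_bigr => j _; rewrite hrowA.
have [j0 _ hj0] := @exists_min _ _ HG _ (fun j => nu (lam 0 j)) (enum 'I_d.+1)
  ltac:(by rewrite -size_eq0 size_enum_ord).
have hj0' j : oge G le (nu (lam 0 j)) (nu (lam 0 j0)) by apply: hj0; rewrite mem_enum.
have l0 : lam 0 j0 != 0.
  apply/eqP => e; move: (hj0' k); rewrite e (proj2 (val_inf _ _ _ _ Hv 0) erefl).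
  case E: (nu (lam 0 k)) => //= _.
  by move: E => /(val_inf _ _ _ _ Hv) /eqP; rewrite (negbTE hk).
pose mu j := lam 0 j / lam 0 j0.
have hmu j : in_O K G le nu (mu j) by apply: (Odiv _ _ _ _ HG Hv).
have mu0 : mu j0 = 1 by rewrite /mu divff.
have hsum' : \sum_j mu j *: (y j - x0) = 0.
  have := congr1 (fun v => (lam 0 j0)^-1 *: v) hsum; rewrite /= scaler0 scaler_sumr => h; rewrite -[RHS]h.
  by apply: eq_bigr => j _; rewrite scalerA mulrC.
pose q j := if j == j0 then x0 else y j.
pose alpha j := - mu j + (if j == j0 then 1 + \sum_k mu k else 0).
have key : \sum_j mu j *: (y j - x0)
    = \sum_j mu j *: q j - (\sum_j mu j) *: x0 + (y j0 - x0).
  transitivity (\sum_j (mu j *: (q j - x0) + (if j == j0 then y j0 - x0 else 0))).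
    apply: eq_bigr => j _; rewrite /q; case: (eqVneq j j0) => [->|ne].
      by rewrite ?eqxx mu0 !scale1r subrr add0r.
    by rewrite ?(negbTE ne) addr0.
  rewrite big_split /= sum_ite; congr (_ + _).
  by rewrite scaler_suml -sumrB; apply: eq_bigr => j _; rewrite scalerBr.
have combo : \sum_j alpha j *: q j = - (\sum_j mu j *: q j) + (1 + \sum_j mu j) *: x0.
  transitivity (\sum_j (- (mu j *: q j) + (if j == j0 then (1 + \sum_k mu k) *: x0 else 0))).
    apply: eq_bigr => j _; rewrite /alpha /q; case: (eqVneq j j0) => [->|ne].
      by rewrite [LHS]scalerDl scaleNr.
    by rewrite ?(negbTE ne) !addr0 scaleNr.
  by rewrite big_split /= sum_ite sumrN.
apply: (hyN j0).
have := hS (w j0) d.+1 q alpha.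
rewrite combo (vec_alg _ _ _ _ _ _ (etrans (esym hsum') key)); apply.
- move=> j; rewrite /q; case: (eqVneq j j0) => [_|ne]; first exact: hx0S.
  apply: hyS; apply/eqP => /(congr1 (@nat_of_ord _)) /= /ord_inj e.
  by move: ne; rewrite e eqxx.
- move=> j; rewrite /alpha; apply: (OD _ _ _ _ HG Hv); first exact: (ON _ _ _ _ HG Hv).
  case: ifP => _; last exact: (O0 _ _ _ _ Hv).
  apply: (OD _ _ _ _ HG Hv); first exact: (O1 _ _ _ _ HG Hv).
  exact: (Osum _ _ _ _ HG Hv).
- rewrite /alpha big_split /= sumrN sum_ite.
  by rewrite addrA addrC addrA addrC subrr addr0.
Qed.
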